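(* Let $\alpha\in\mathbb R$ and let $(\phi,\psi)$ be a $q\times q$ Stieltjes pair. Then there is a discrete subset $\mathcal D$ of $\mathbb C\setminus[\alpha,\infty)$ satisfying conditions (i), (ii), (iii) of the definition of a Stieltjes pair and additionally: (iv) $\frac1{\operatorname{Im}z}\operatorname{Im}[\psi(z)^*\phi(z)]$ is positive semidefinite for each $z\in\mathbb C\setminus(\mathbb R\cup\mathcal D)$; (v) $\frac1{\operatorname{Im}z}\operatorname{Im}[(z-\alpha)\psi(z)^*\phi(z)]$ is positive semidefinite for each $z\in\mathbb C\setminus(\mathbb R\cup\mathcal D)$; (vi) $\operatorname{Re}[\psi(z)^*\phi(z)]$ is positive semidefinite for each $z\in\{w\in\mathbb C:\operatorname{Re}w<\alpha\}\setminus\mathcal D$.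
   Context: For a square matrix $A$, $\operatorname{Re}A:=\frac12(A+A^* )$, $\operatorname{Im}A:=\frac1{2i}(A-A^* )$. $J_q:=\begin{pmatrix}0&-iI_q\\ iI_q&0\end{pmatrix}$. A pair $(\phi,\psi)$ of $q\times q$ matrix-valued functions meromorphic in $\mathbb C\setminus[\alpha,\infty)$ is a $q\times q$ Stieltjes pair if there is a discrete subset $\mathcal D$ of $\mathbb C\setminus[\alpha,\infty)$ such that: (i) $\phi,\psi$ are holomorphic in $\mathbb C\setminus([\alpha,\infty)\cup\mathcal D)$; (ii) $\operatorname{rank}\begin{pmatrix}\phi(z)\\\psi(z)\end{pmatrix}=q$ there; (iii) for each $z\in\mathbb C\setminus(\mathbb R\cup\mathcal D)$, $\begin{pmatrix}\phi(z)\\\psi(z)\end{pmatrix}^*\frac{-J_q}{2\operatorname{Im}z}\begin{pmatrix}\phi(z)\\\psi(z)\end{pmatrix}$ and $\begin{pmatrix}(z-\alpha)\phi(z)\\\psi(z)\end{pmatrix}^*\frac{-J_q}{2\operatorname{Im}z}\begin{pmatrix}(z-\alpha)\phi(z)\\\psi(z)\end{pmatrix}$ are positive semidefinite. *)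

(* Defs.v *)
From HB Require Import structures.
From mathcomp Require Import all_boot all_order all_algebra.
From mathcomp Require Import complex.
From mathcomp Require Import reals.
Set Implicit Arguments. Unset Strict Implicit. Unset Printing Implicit Defensive.
Import Order.TTheory GRing.Theory Num.Theory.
Local Open Scope ring_scope.
Local Open Scope complex_scope.

Section Defs.
Variable R : realType.
Local Notation C := R[i].

Definition adjmx m n (A : 'M[C]_(m, n)) : 'M[C]_(n, m) := (map_mx (@conjc R) A)^T.

Definition mxRe n (A : 'M[C]_n) : 'M[C]_n := (2%:R)^-1 *: (A + adjmx A).
Definition mxIm n (A : 'M[C]_n) : 'M[C]_n := (2%:R * 'i)^-1 *: (A - adjmx A).

(* positive semidefinite: v^* A v >= 0 for all v (order of the num field C:
   nonnegative real) *)
Definition psd n (A : 'M[C]_n) : Prop :=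
  forall v : 'cV[C]_n, 0 <= (adjmx v *m A *m v) 0 0.

Definition Jq q : 'M[C]_(q + q) :=
  block_mx 0 (- 'i *: 1%:M) ('i *: 1%:M) 0.

Definition slit_dom (alpha : R) (z : C) : Prop :=
  ~ (complex.Im z = 0 /\ alpha <= complex.Re z).

Definition discrete_in (U D : C -> Prop) : Prop :=
  (forall z, D z -> U z) /\
  (forall z, U z -> exists r : R, 0 < r /\
     forall w, D w -> `|w - z| < r%:C -> w = z).

Definition cderivable (g : C -> C) (z : C) : Prop :=
  exists l : C, forall e : R, 0 < e -> exists d : R, 0 < d /\
    forall h : C, 0 < `|h| -> `|h| < d%:C ->
      `|(g (z + h) - g z) / h - l| < e%:C.

Definition holomorphic_on m n (U : C -> Prop) (f : C -> 'M[C]_(m, n)) : Prop :=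
  forall z, U z -> forall i j, cderivable (fun w => f w i j) z.

Definition pole_at m n (f : C -> 'M[C]_(m, n)) (p : C) : Prop :=
  exists (k : nat) (g : C -> 'M[C]_(m, n)) (r : R), 0 < r /\
    holomorphic_on (fun z => `|z - p| < r%:C) g /\
    forall z, 0 < `|z - p| -> `|z - p| < r%:C -> g z = (z - p) ^+ k *: f z.

Definition meromorphic_on m n (U : C -> Prop) (f : C -> 'M[C]_(m, n)) : Prop :=
  exists P : C -> Prop, discrete_in U P /\
    holomorphic_on (fun z => U z /\ ~ P z) f /\
    forall p, P p -> pole_at f p.

Definition stieltjes_conds q (alpha : R) (phi psi : C -> 'M[C]_q)
    (D : C -> Prop) : Prop :=
  discrete_in (slit_dom alpha) D /\
  (* (i) *)
  holomorphic_on (fun z => slit_dom alpha z /\ ~ D z) phi /\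
  holomorphic_on (fun z => slit_dom alpha z /\ ~ D z) psi /\
  (* (ii) *)
  (forall z, slit_dom alpha z -> ~ D z -> \rank (col_mx (phi z) (psi z)) = q) /\
  (* (iii) *)
  (forall z, complex.Im z != 0 -> ~ D z ->
     psd (adjmx (col_mx (phi z) (psi z)) *m
            ((2%:R * (complex.Im z)%:C)^-1 *: - Jq q) *m col_mx (phi z) (psi z)) /\
     psd (adjmx (col_mx ((z - alpha%:C) *: phi z) (psi z)) *m
            ((2%:R * (complex.Im z)%:C)^-1 *: - Jq q) *m
            col_mx ((z - alpha%:C) *: phi z) (psi z))).

Definition stieltjes_pair q (alpha : R) (phi psi : C -> 'M[C]_q) : Prop :=
  meromorphic_on (slit_dom alpha) phi /\ meromorphic_on (slit_dom alpha) psi /\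
  exists D, stieltjes_conds alpha phi psi D.

End Defs.

(* Main.v *)
Require Import Defs.
From HB Require Import structures.
From mathcomp Require Import all_boot all_order all_algebra.
From mathcomp Require Import complex.
From mathcomp Require Import reals.
From mathcomp Require Import ring lra.
Import Order.TTheory GRing.Theory Num.Theory.
Local Open Scope ring_scope.
Local Open Scope complex_scope.
Import Normc.
Set Implicit Arguments. Unset Strict Implicit.

Section S.
Variable R : realType.
Local Notation C := R[i].

Lemma normCE (x : C) : `|x| = (normc x)%:C. Proof. by []. Qed.

Lemma adjmx_mul m n p (A : 'M[C]_(m,n)) (B : 'M[C]_(n,p)) :
  adjmx (A *m B) = adjmx B *m adjmx A.
Proof. by rewrite /adjmx map_mxM trmx_mul. Qed.

Lemma adjmxK m n (A : 'M[C]_(m,n)) : adjmx (adjmx A) = A.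
Proof. by apply/matrixP => i j; rewrite !mxE conjcK. Qed.

Lemma adjmx_col m1 m2 n (A : 'M[C]_(m1,n)) (B : 'M[C]_(m2,n)) :
  adjmx (col_mx A B) = row_mx (adjmx A) (adjmx B).
Proof. by rewrite /adjmx map_col_mx tr_col_mx. Qed.

Definition qf n (v : 'cV[C]_n) (K : 'M[C]_n) := (adjmx v *m K *m v) 0 0.

Lemma adj00 n (a b : 'cV[C]_n) : (adjmx b *m a) 0 0 = ((adjmx a *m b) 0 0)^*.
Proof. by rewrite -[a in LHS]adjmxK -adjmx_mul [in LHS]/adjmx !mxE. Qed.

Lemma qf_adj n v (K : 'M[C]_n) : qf v (adjmx K) = (qf v K)^*.
Proof. rewrite /qf; have -> : adjmx v *m adjmx K *m v = adjmx (adjmx v *m K *m v) by rewrite !adjmx_mul adjmxK mulmxA.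
by rewrite {1}/adjmx !mxE. Qed.

Lemma qfD n v (K1 K2 : 'M[C]_n) : qf v (K1 + K2) = qf v K1 + qf v K2.
Proof. by rewrite /qf mulmxDr mulmxDl mxE. Qed.

Lemma qfB n v (K1 K2 : 'M[C]_n) : qf v (K1 - K2) = qf v K1 - qf v K2.
Proof. by rewrite /qf mulmxBr mulmxBl !mxE. Qed.

Lemma qfZ n v c (K : 'M[C]_n) : qf v (c *: K) = c * qf v K.
Proof. by rewrite /qf -scalemxAr -scalemxAl mxE. Qed.

Lemma qf_sand n m (v : 'cV[C]_n) (X : 'M[C]_(m,n)) K :
  qf v (adjmx X *m K *m X) = qf (X *m v) K.
Proof. by rewrite /qf adjmx_mul !mulmxA. Qed.

Lemma inv_i : ('i : C)^-1 = - 'i.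
Proof. apply/eqP; rewrite eq_complex /= expr0n /= expr1n !add0r invr1 !mul0r oppr0 mul1r; by apply/andP. Qed.

Lemma Re_form (m : C) : 2%:R^-1 * (m + m^*) = (complex.Re m)%:C.
Proof. by rewrite ReJ_add mulrC. Qed.

Lemma aux_im (F : fieldType) (x a b : F) : 2%:R^-1 * -b * (x - a) = (a - x)/2%:R * b.
Proof. ring. Qed.

Lemma Im_form (m : C) : (2%:R * 'i)^-1 * (m - m^*) = (complex.Im m)%:C.
Proof. rewrite ImJ_sub invfM inv_i. exact: aux_im. Qed.

Lemma qf_Re n v (K : 'M[C]_n) : qf v (mxRe K) = (complex.Re (qf v K))%:C.
Proof. by rewrite /mxRe qfZ qfD qf_adj Re_form. Qed.

Lemma qf_Im n v (K : 'M[C]_n) : qf v (mxIm K) = (complex.Im (qf v K))%:C.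
Proof. by rewrite /mxIm qfZ qfB qf_adj Im_form. Qed.


Lemma aux_J (F : numFieldType) (Y T i : F) (hi : i * i = -1) :
  (2%:R * Y)^-1 * (i * (2%:R * T * i)) = Y^-1 * - T.
Proof.
have -> : i * (2%:R * T * i) = 2%:R * T * (i * i) by ring.
rewrite hi invfM.
transitivity (2%:R^-1 * 2%:R * (Y^-1 * -T)); first by ring.
by rewrite mulVf ?mul1r // pnatr_eq0.
Qed.

Lemma i_i : ('i : C) * 'i = -1.
Proof. by rewrite -expr2 sqr_i. Qed.

Lemma ImJ (s : C) : complex.Im (s^*) = - complex.Im s.
Proof. by case: s. Qed.

Lemma qfJ q (a b : 'cV[C]_q) :
  qf (col_mx a b) (- Jq R q) = 'i * ((adjmx a *m b) 0 0 - ((adjmx a *m b) 0 0)^*).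
Proof.
rewrite /qf /Jq adjmx_col.
have -> : - block_mx 0 (- 'i *: 1%:M) ('i *: 1%:M) 0 =
   block_mx 0 ('i *: 1%:M) (- 'i *: 1%:M) (0 : 'M[C]_(q,q)).
  by rewrite -scaleN1r scale_block_mx !scaler0 !scalerA !mulN1r opprK.
rewrite mul_row_block !mulmx0 add0r addr0 mul_row_col.
rewrite -!scalemxAr !mulmx1 -!scalemxAl.
have -> : adjmx b *m a = adjmx (adjmx a *m b) by rewrite adjmx_mul adjmxK.
move: (adjmx a *m b) => s.
rewrite !mxE.
by rewrite mulNr mulrBr addrC.
Qed.

Lemma iii_iv q (y : R) (A B : 'M[C]_q) v :
  qf v (adjmx (col_mx A B) *m ((2%:R * y%:C)^-1 *: - Jq R q) *m col_mx A B) =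
  qf v (y%:C^-1 *: mxIm (adjmx B *m A)).
Proof.
rewrite qf_sand mul_col_mx qfZ qfJ qfZ qf_Im.
have -> : qf v (adjmx B *m A) = ((adjmx (A *m v) *m (B *m v)) 0 0)^*.
  by rewrite -adj00 /qf adjmx_mul !mulmxA.
by rewrite ImJ subcJ aux_J ?i_i // rmorphN.
Qed.

Lemma psd_ext n (K1 K2 : 'M[C]_n) : psd K1 -> (forall v, qf v K1 = qf v K2) -> psd K2.
Proof. by move=> h e v; move: (h v); rewrite -/(qf v K1) e. Qed.


Definition cont (g : C -> C) (z : C) := forall e : R, 0 < e ->
  exists d : R, 0 < d /\ forall w, normc (w - z) < d -> normc (g w - g z) < e.

Lemma normc_ge0 (x : C) : 0 <= normc x.
Proof. by case: x => a b; rewrite /= sqrtr_ge0. Qed.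

Lemma cont_ext f g z : (forall w, f w = g w) -> cont f z -> cont g z.
Proof. move=> e h eps he; have [d [hd H]] := h eps he; exists d; split=> // w hw; rewrite -!e; exact: H. Qed.

Lemma cont_const c z : cont (fun _ => c) z.
Proof. by move=> e he; exists 1; split=> // w _; rewrite subrr normc0. Qed.

Lemma cont_add f g z : cont f z -> cont g z -> cont (fun w => f w + g w) z.
Proof.
move=> hf hg e he.
have [d1 [hd1 H1]] := hf (e / 2%:R) ltac:(by rewrite divr_gt0).
have [d2 [hd2 H2]] := hg (e / 2%:R) ltac:(by rewrite divr_gt0).
exists (Num.min d1 d2); split; first by rewrite lt_min hd1 hd2.
move=> w; rewrite lt_min => /andP[w1 w2].
have -> : f w + g w - (f z + g z) = (f w - f z) + (g w - g z) by rewrite addrACA opprD.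
apply: le_lt_trans (le_normcD _ _) _.
have := H1 _ w1; have := H2 _ w2; lra.
Qed.

Lemma cont_conj f z : cont f z -> cont (fun w => (f w)^*) z.
Proof.
move=> hf e he; have [d [hd H]] := hf e he; exists d; split=> // w hw.
have -> : (f w)^* - (f z)^* = (f w - f z)^* by rewrite rmorphB.
by move: (f w - f z) (H _ hw) => [a b]; rewrite /= sqrrN.
Qed.

Lemma cont_mul f g z : cont f z -> cont g z -> cont (fun w => f w * g w) z.
Proof.
move=> hf hg e he.
set Mf := normc (f z); set Mg := normc (g z).
have hMf : 0 <= Mf by apply: normc_ge0.
have hMg : 0 <= Mg by apply: normc_ge0.
have e1p : 0 < Num.min 1 (e / (2%:R * (Mg + 1))).
  by rewrite lt_min ltr01 /= divr_gt0 // mulr_gt0 // ltr_wpDl.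
have [d1 [hd1 H1]] := hf _ e1p.
have [d2 [hd2 H2]] := hg (e / (2%:R * (Mf + 1))) ltac:(by rewrite divr_gt0 // mulr_gt0 // ltr_wpDl).
exists (Num.min d1 d2); split; first by rewrite lt_min hd1 hd2.
move=> w; rewrite lt_min => /andP[w1 w2].
have := H1 _ w1; rewrite lt_min => /andP[c1 c2].
have c3 := H2 _ w2.
have -> : f w * g w - f z * g z = f w * (g w - g z) + (f w - f z) * g z by ring.
apply: le_lt_trans (le_normcD _ _) _.
rewrite !normcM -/Mg.
have hA : normc (f w) <= Mf + 1.
  have -> : f w = (f w - f z) + f z by rewrite subrK.
  apply: le_trans (le_normcD _ _) _; rewrite -/Mf; lra.
have hB := normc_ge0 (g w - g z).
have hC := normc_ge0 (f w - f z).
have k1 : normc (f w) * normc (g w - g z) <= (Mf + 1) * normc (g w - g z).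
  by rewrite ler_wpM2r.
have k2 : (Mf + 1) * normc (g w - g z) < e / 2%:R.
  rewrite -(ltr_pM2l (_ : 0 < (Mf + 1)^-1)); last by rewrite invr_gt0 ltr_wpDl.
  rewrite mulrA mulVf ?mul1r; last by rewrite gt_eqF // ltr_wpDl.
  by move: c3; rewrite invfM mulrA [_ * (Mf+1)^-1]mulrC mulrA.
have k3 : normc (f w - f z) * Mg <= normc (f w - f z) * (Mg + 1) by rewrite ler_wpM2l // lerDl.
have k4 : normc (f w - f z) * (Mg + 1) < e / 2%:R.
  rewrite -ltr_pdivlMr ?ltr_wpDl //.
  by move: c2; rewrite invfM mulrA.
lra.
Qed.

Lemma cont_sum (I : finType) (F : I -> C -> C) z :
  (forall k, cont (F k) z) -> cont (fun w => \sum_k F k w) z.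
Proof.
move=> h; rewrite unlock /=.
elim: (index_enum I) => [|k s IH] /=.
  exact: cont_const.
exact: cont_add.
Qed.

Lemma deriv_cont g z : cderivable g z -> cont g z.
Proof.
move=> [l hl] e he.
have [d [hd H]] := hl 1 ltr01.
have hL : 0 < normc l + 1 by rewrite ltr_wpDl // normc_ge0.
exists (Num.min d (e / (normc l + 1))); split; first by rewrite lt_min hd divr_gt0.
move=> w; rewrite lt_min => /andP[w1 w2].
have [hw0|hw0] := eqVneq (w - z) 0.
  by move/eqP: hw0; rewrite subr_eq0 => /eqP ->; rewrite subrr normc0.
have hn : 0 < normc (w - z).
  rewrite lt_def normc_ge0 andbT; apply/eqP => /eq0_normc /eqP; by rewrite (negPf hw0).
have := H (w - z); rewrite !normCE !ltcR => /(_ hn w1).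
rewrite [z + _]addrC subrK => hq.
have -> : g w - g z = (w - z) * ((g w - g z) / (w - z) - l) + (w - z) * l.
  by rewrite mulrBr addrNK mulrC divfK.
apply: le_lt_trans (le_normcD _ _) _.
rewrite !normcM.
have k1 : normc (w - z) * normc ((g w - g z) / (w - z) - l) <= normc (w - z) * 1.
  by rewrite ler_wpM2l ?normc_ge0 // ltW.
have k2 : normc (w - z) * (normc l + 1) < e by rewrite -ltr_pdivlMr.
lra.
Qed.


Lemma cont_mulmx m n p (A : C -> 'M[C]_(m,n)) (B : C -> 'M[C]_(n,p)) z :
  (forall i j, cont (fun w => A w i j) z) -> (forall i j, cont (fun w => B w i j) z) ->
  forall i j, cont (fun w => (A w *m B w) i j) z.
Proof.
move=> hA hB i j.
apply: (@cont_ext (fun w => \sum_k A w i k * B w k j)); first by move=> w; rewrite mxE.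
apply: cont_sum => k; exact: cont_mul.
Qed.

Lemma cont_adj m n (A : C -> 'M[C]_(m,n)) z :
  (forall i j, cont (fun w => A w i j) z) -> forall i j, cont (fun w => adjmx (A w) i j) z.
Proof.
move=> hA i j; apply: (@cont_ext (fun w => (A w j i)^*)); first by move=> w; rewrite !mxE.
exact: cont_conj.
Qed.

Lemma Re_le_normc (u : C) : complex.Re u <= normc u.
Proof.
case: u => a b /=; apply: le_trans (ler_norm a) _; rewrite -sqrtr_sqr.
by apply: ler_wsqrtr; rewrite lerDl sqr_ge0.
Qed.

Lemma vi_scalar (x y a p r : R) : y != 0 -> x < a -> 0 <= y^-1 * r ->
  0 <= y^-1 * ((x - a) * r + y * p) -> 0 <= p.
Proof.
move=> hy hxa h1 h2.
have e : y^-1 * ((x - a) * r + y * p) = (x - a) * (y^-1 * r) + p by field.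
rewrite e in h2; move: h1 h2; set w := y^-1 * r => h1 h2.
nra.
Qed.

End S.

Theorem lemma10p13 (R : realType) (alpha : R) (q : nat)
    (phi psi : R[i] -> 'M[R[i]]_q) :
  stieltjes_pair alpha phi psi ->
  exists D : R[i] -> Prop,
    stieltjes_conds alpha phi psi D /\
    (* (iv) *)
    (forall z : R[i], complex.Im z != 0 -> ~ D z ->
       psd ((complex.Im z)%:C^-1 *: mxIm (adjmx (psi z) *m phi z))) /\
    (* (v) *)
    (forall z : R[i], complex.Im z != 0 -> ~ D z ->
       psd ((complex.Im z)%:C^-1 *: mxIm ((z - alpha%:C) *: (adjmx (psi z) *m phi z)))) /\
    (* (vi) *)
    (forall z : R[i], complex.Re z < alpha -> ~ D z ->
       psd (mxRe (adjmx (psi z) *m phi z))).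
Proof.
move=> [_ [_ [D HD]]]; exists D; split => //.
have HD' := HD; case: HD' => [Hdisc [Hphi [Hpsi [_ Hiii]]]].
have Hiv : forall z : R[i], complex.Im z != 0 -> ~ D z ->
       psd ((complex.Im z)%:C^-1 *: mxIm (adjmx (psi z) *m phi z)).
  move=> z hz hD; have [h1 _] := Hiii z hz hD.
  refine (psd_ext h1 _) => v; exact: iii_iv.
have Hv : forall z : R[i], complex.Im z != 0 -> ~ D z ->
       psd ((complex.Im z)%:C^-1 *: mxIm ((z - alpha%:C) *: (adjmx (psi z) *m phi z))).
  move=> z hz hD; have [_ h2] := Hiii z hz hD.
  refine (psd_ext h2 _) => v. rewrite iii_iv (scalemxAr (z - alpha%:C) (adjmx (psi z)) (phi z)). done.
have Hvi1 : forall z : R[i], complex.Im z != 0 -> complex.Re z < alpha -> ~ D z ->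
       psd (mxRe (adjmx (psi z) *m phi z)).
  move=> z hz hre hD v.
  have P1 : 0 <= qf v ((complex.Im z)%:C^-1 *: mxIm (adjmx (psi z) *m phi z)) := Hiv z hz hD v.
  have P2 : 0 <= qf v ((complex.Im z)%:C^-1 *: mxIm ((z - alpha%:C) *: (adjmx (psi z) *m phi z))) := Hv z hz hD v.
  change (0 <= qf v (mxRe (adjmx (psi z) *m phi z))).
  move: P1 P2; rewrite qf_Re !(qfZ _ _ (mxIm _)) !qf_Im qfZ ler0c.
  move: (qf v _) hz hre => m; clear hD.
  case: z => x y; case: m => p r /= hy hx.
  rewrite -fmorphV -!rmorphM !ler0c => h1 h2.
  apply: (vi_scalar hy hx h1); by rewrite subr0 in h2.
split => //; split => //.
move=> z hre hD.
have [hy|hy] := eqVneq (complex.Im z) 0; last exact: Hvi1.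
move=> v; change (0 <= qf v (mxRe (adjmx (psi z) *m phi z))); rewrite qf_Re ler0c.
have hslit : slit_dom alpha z by case=> _ h; move: (lt_le_trans hre h); rewrite ltxx.
pose g := fun w => qf v (adjmx (psi w) *m phi w).
have cg : cont g z.
  have cphi : forall i j, cont (fun w => phi w i j) z.
    by move=> i j; apply: deriv_cont; apply: Hphi.
  have cpsi : forall i j, cont (fun w => psi w i j) z.
    by move=> i j; apply: deriv_cont; apply: Hpsi.
  apply: (cont_mulmx (A := fun w => adjmx v *m (adjmx (psi w) *m phi w)) (B := fun _ => v)).
    apply: cont_mulmx; first by move=> i j; exact: cont_const.
    by apply: cont_mulmx => //; apply: cont_adj.
  by move=> i j; exact: cont_const.
change (0 <= complex.Re (g z)).
have [r [hr Hr]] := Hdisc.2 z hslit.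
rewrite leNgt; apply/negP => hneg.
have he : 0 < - complex.Re (g z) by rewrite oppr_gt0.
have [d [hd Hc]] := cg _ he.
pose t := Num.min d r / 2%:R.
have hk : 0 < Num.min d r by rewrite lt_min hd hr.
have hkd : Num.min d r <= d by rewrite ge_min lexx.
have hkr : Num.min d r <= r by rewrite ge_min lexx orbT.
have ht : 0 < t by rewrite divr_gt0.
have htd : t < d by rewrite /t; lra.
have htr : t < r by rewrite /t; lra.
pose w : R[i] := complex.Re z +i* t.
have hwz : normc (w - z) = t.
  rewrite /w; case: (z) hy => x y /= ->.
  by rewrite subrr subr0 expr0n /= add0r sqrtr_sqr ger0_norm // ltW.
have hwD : ~ D w.
  move=> Dw; have := Hr w Dw; rewrite normCE ltcR hwz => /(_ htr) ewz.
  by move: hy; rewrite -ewz /= => ht0; move: ht; rewrite ht0 ltxx.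
have hwIm : complex.Im w != 0 by rewrite /= gt_eqF.
have hwRe : complex.Re w < alpha by [].
have := Hvi1 w hwIm hwRe hwD v.
change (0 <= qf v (mxRe (adjmx (psi w) *m phi w)) -> False); rewrite qf_Re ler0c -/(g w) => hgw.
have := Hc w; rewrite hwz => /(_ htd) hc.
have := Re_le_normc (g w - g z); rewrite raddfB /=.
lra.
Qed.
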